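(* Let $e\ge3$, let $A$ be an arm sequence and $n\in\mathbb N$, and let $y=\max\{A_t/t: t\in\{1,\dots,n\}\}$. Then $A_t=\lfloor yt\rfloor$ for $t=1,\dots,n$. Consequently $\mathcal R_A^{(n)}=\mathcal R_{A^{y+}}^{(n)}$.
   Context: An arm sequence is an integer sequence $A=(A_1,A_2,\dots)$ with $t-1\le A_t\le(e-1)t$ and $A_{t+u}\in\{A_t+A_u,A_t+A_u+1\}$ for all $t,u\ge1$. For real $y\in[1,e-1]$, $A^{y+}$ is the arm sequence $A^{y+}_t=\lfloor yt\rfloor$. $\mathcal R_A$ is the crystal whose vertices are the $A$-regular partitions (no hook of length $et$ and arm length $A_t$ for any $t\ge1$) with arrows $\lambda\xrightarrow{i}f_i\lambda$ defined by the $A$-dependent $i$-signature rule (for distinct $i$-nodes $(r,c),(s,d)$ with $s-r+c-d=et$, $t\ge0$ after swapping, $(r,c)\prec(s,d)$ iff $c-d\le A_t$, $A_0:=0$; addable/removable $i$-nodes in decreasing order give a $\pm$ word, adjacent $+-$ cancelled; $f_i$ adds the node of the first remaining $+$). $\mathcal R_A^{(n)}$ denotes the induced subgraph on partitions of size at most $ne$. *)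

(* Defs.v *)
From mathcomp Require Import all_boot all_order all_algebra.
Set Implicit Arguments. Unset Strict Implicit. Unset Printing Implicit Defensive.
Import Order.TTheory GRing.Theory Num.Theory.
Local Open Scope ring_scope.

(* Sequences are indexed from 1: A t for t >= 1 (the value A 0 is irrelevant;
   in the ordering rule the convention A_0 := 0 is used, see Aext). *)

Definition arm_seq (e : nat) (A : nat -> int) : Prop :=
  (forall t : nat, (0 < t)%N -> (t.-1)%:Z <= A t <= ((e.-1 * t)%N)%:Z) /\
  (forall t u : nat, (0 < t)%N -> (0 < u)%N ->
     A (t + u)%N = A t + A u \/ A (t + u)%N = A t + A u + 1).

Definition Aplus (y : rat) : nat -> int := fun t => Num.floor (y * t%:R).

Definition Aext (A : nat -> int) (t : nat) : int := if t == 0%N then 0 else A t.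

Definition is_partition (l : seq nat) : bool :=
  sorted (fun x y => (y <= x)%N) l && all (fun x => (0 < x)%N) l.

Definition node := (nat * nat)%type.  (* (row, column), both 1-indexed *)

Definition prow (l : seq nat) (r : nat) : nat := if r is r'.+1 then nth 0%N l r' else 0%N.
Definition pcol (l : seq nat) (c : nat) : nat := count (fun x => (c <= x)%N) l.

Definition in_diagram (l : seq nat) (x : node) : bool :=
  [&& (0 < x.1)%N, (0 < x.2)%N & (x.2 <= prow l x.1)%N].

Definition arm (l : seq nat) (x : node) : nat := (prow l x.1 - x.2)%N.
Definition leg (l : seq nat) (x : node) : nat := (pcol l x.2 - x.1)%N.
Definition hook_length (l : seq nat) (x : node) : nat := (arm l x + leg l x).+1.

Definition regular (e : nat) (A : nat -> int) (l : seq nat) : Prop :=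
  forall x : node, in_diagram l x -> forall t : nat, (0 < t)%N ->
    ~ (hook_length l x = (e * t)%N /\ (arm l x)%:Z = A t).

Definition residue (e : nat) (x : node) : int := ((x.2%:Z - x.1%:Z) %% e%:Z)%Z.

Definition addable_nodes (l : seq nat) : seq node :=
  [seq (r, (prow l r).+1) | r <- iota 1 (size l).+1 &
      (r == 1%N) || (prow l r < prow l r.-1)%N].

Definition removable_nodes (l : seq nat) : seq node :=
  [seq (r, prow l r) | r <- iota 1 (size l) & (prow l r.+1 < prow l r)%N].

Definition signed_inodes (e i : nat) (l : seq nat) : seq (bool * node) :=
  [seq (true, x) | x <- addable_nodes l & residue e x == i%:Z] ++
  [seq (false, x) | x <- removable_nodes l & residue e x == i%:Z].

(** The A-dependent order: for i-nodes x = (r,c), y = (s,d), with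
    D = s - r + c - d (= e t). If D >= 0 then x < y iff c - d <= A_t;
    otherwise (swapping) y < x iff d - c <= A_{t'} with -D = e t', and x < y
    iff not y < x. *)
Definition nprec (e : nat) (A : nat -> int) (x y : node) : bool :=
  let D := (y.1%:Z - x.1%:Z) + (x.2%:Z - y.2%:Z) in
  if 0 <= D then x.2%:Z - y.2%:Z <= Aext A `|(D %/ e%:Z)%Z|%N
  else ~~ (y.2%:Z - x.2%:Z <= Aext A `|((- D) %/ e%:Z)%Z|%N).

(** Cancellation of adjacent +- pairs (repeatedly), via a stack. *)
Definition cancel_step (st : seq (bool * node)) (z : bool * node) :=
  match z, st with
  | (false, _), (true, _) :: st' => st'
  | _, _ => z :: st
  end.

Definition reduced_word (w : seq (bool * node)) : seq (bool * node) :=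
  rev (foldl cancel_step [::] w).

Definition first_plus (w : seq (bool * node)) : option node :=
  match [seq z <- reduced_word w | z.1] with
  | z :: _ => Some z.2
  | [::] => None
  end.

Definition add_node (l : seq nat) (x : node) : seq nat := set_nth 0%N l x.1.-1 x.2.

(** Arrows of the crystal R_A: l --i--> f_i l, between A-regular partitions.
    The signed i-nodes are listed in decreasing order for the A-order. *)
Definition crystal_arrow (e : nat) (A : nat -> int) (i : nat) (l m : seq nat) : Prop :=
  is_partition l /\ regular e A l /\ regular e A m /\
  exists w : seq (bool * node),
    [/\ perm_eq w (signed_inodes e i l),
        pairwise (fun a b => nprec e A b.2 a.2) w &
        exists x, first_plus w = Some x /\ m = add_node l x].

Definition subcrystal_eq (e n : nat) (A B : nat -> int) : Prop :=
  (forall l, is_partition l -> (sumn l <= n * e)%N -> (regular e A l <-> regular e B l)) /\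
  (forall (i : nat) l m, (i < e)%N -> is_partition l -> is_partition m ->
     (sumn l <= n * e)%N -> (sumn m <= n * e)%N ->
     (crystal_arrow e A i l m <-> crystal_arrow e B i l m)).

(* Main.v *)
Require Import Defs.
From mathcomp Require Import all_boot all_order all_algebra.
From mathcomp Require Import zify ring lra.
Import Order.TTheory GRing.Theory Num.Theory.
Local Open Scope ring_scope.

Lemma arm_mul e A t k : arm_seq e A -> (0 < t)%N -> (0 < k)%N ->
  (k%:Z * A t <= A (k * t)%N) /\ (A (k * t)%N + 1 <= k%:Z * (A t + 1)).
Proof.
move=> [_ HA] Ht; elim: k => [//|k IH] _.
case: (posnP k) => [->|Hk]; first by rewrite mul1n mul1r; lra.
have [IH1 IH2] := IH Hk.
have Hkt : (0 < k * t)%N by rewrite muln_gt0 Hk.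
rewrite mulSn; have := HA t (k * t)%N Ht Hkt.
have -> : (k.+1)%:Z = k%:Z + 1 by rewrite -addn1 PoszD.
move=> [->|->]; split; nia.
Qed.

Lemma part1 e A n (y : rat) :
  arm_seq e A ->
  (exists2 t : nat, (1 <= t <= n)%N & y = (A t)%:~R / t%:R) ->
  (forall t : nat, (1 <= t <= n)%N -> (A t)%:~R / t%:R <= y) ->
  (forall t : nat, (1 <= t <= n)%N -> A t = Num.floor (y * t%:R)).
Proof.
move=> HA [s /andP[Hs1 _] Hy] Hmax t Ht.
have Ht1 : (0 < t)%N by case/andP: Ht.
have [H1 _] := arm_mul _ _ s t HA Hs1 Ht1.
have [_ H2] := arm_mul _ _ t s HA Ht1 Hs1.
rewrite mulnC in H2.
have Hlt : t%:Z * A s < s%:Z * (A t + 1) by lia.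
have Hle := Hmax t Ht.
have tpos : (0 : rat) < t%:R by rewrite ltr0n.
have spos : (0 : rat) < s%:R by rewrite ltr0n.
apply/esym/floor_def; apply/andP; split.
  by rewrite -ler_pdivrMr.
rewrite Hy.
have : (t%:Z * A s)%:~R < (s%:Z * (A t + 1))%:~R :> rat by rewrite ltr_int.
rewrite !intrM !intrD /= => H.
rewrite mulrAC ltr_pdivrMr //.
rewrite [_ * s%:R]mulrC mulrC.
move: H; rewrite -!pmulrn !mulr1n //.
by rewrite [_ * t%:R]mulrC [_ * s%:R]mulrC.
Qed.

Lemma size_le_sumn (l : seq nat) : all (fun x => (0 < x)%N) l -> (size l <= sumn l)%N.
Proof. elim: l => [//|a l IH] /= /andP[Ha Hl]; have := IH Hl; lia. Qed.

Lemma size_head_sumn (l : seq nat) : all (fun x => (0 < x)%N) l ->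
  (size l + head 0%N l <= (sumn l).+1)%N /\ (head 0%N l <= sumn l)%N.
Proof.
case: l => [//|a l] /= /andP[Ha Hl]; have := size_le_sumn _ Hl; lia.
Qed.

Lemma nth_le_head (l : seq nat) i : sorted (fun x y => (y <= x)%N) l ->
  (nth 0%N l i <= head 0%N l)%N.
Proof.
elim: l i => [|a l IH] [|i] //= Hs.
have := IH i (path_sorted Hs).
case: l Hs IH => [|b l'] /=; first by rewrite nth_nil.
move=> /andP[Hba _] _; lia.
Qed.

Lemma prow_le_head l r : sorted (fun x y => (y <= x)%N) l -> (prow l r <= head 0%N l)%N.
Proof. by case: r => [|r] //= Hs; apply: nth_le_head. Qed.

Lemma hook_le l x : is_partition l -> in_diagram l x -> (hook_length l x <= sumn l)%N.
Proof.
case/andP=> Hs Hp; case: x => r c /and3P [/= Hr Hc Hcr].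
have := prow_le_head l r Hs; have := size_head_sumn _ Hp.
have : (pcol l c <= size l)%N by apply: count_size.
rewrite /hook_length /arm /leg /=; lia.
Qed.

Lemma signed_bound e i l z : sorted (fun x y => (y <= x)%N) l ->
  z \in signed_inodes e i l ->
  (1 <= z.2.1 <= (size l).+1)%N /\ (z.2.2 <= (head 0%N l).+1)%N.
Proof.
move=> Hs; rewrite mem_cat => /orP[] /mapP [x]; rewrite mem_filter => /andP[_ Hx] -> /=.
  move/mapP: Hx => [r]; rewrite mem_filter mem_iota => /andP[_ Hr] -> /=.
  have := prow_le_head l r Hs; lia.
move/mapP: Hx => [r]; rewrite mem_filter mem_iota => /andP[_ Hr] -> /=.
have := prow_le_head l r Hs; lia.
Qed.

Section Eq.
Variables (e n : nat) (A B : nat -> int).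
Hypothesis he : (3 <= e)%N.
Hypothesis hAB : forall t : nat, (1 <= t <= n)%N -> A t = B t.

Lemma aext_eq k : (k <= n)%N -> Aext A k = Aext B k.
Proof.
rewrite /Aext; case: eqP => // /eqP Hk Hkn; apply: hAB; lia.
Qed.

Lemma nprec_eq (S H : nat) (x y : node) : (S + H <= n * e + 1)%N ->
  (1 <= x.1 <= S.+1)%N -> (x.2 <= H.+1)%N ->
  (1 <= y.1 <= S.+1)%N -> (y.2 <= H.+1)%N ->
  nprec e A x y = nprec e B x y.
Proof.
case: x => x1 x2; case: y => y1 y2 /= HSH Hx1 Hx2 Hy1 Hy2.
rewrite /nprec /=.
case: ifP => HD.
  by rewrite aext_eq //; move: HD; nia.
by rewrite aext_eq //; move: HD; nia.
Qed.

Lemma regular_eq l : is_partition l -> (sumn l <= n * e)%N ->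
  (regular e A l <-> regular e B l).
Proof.
move=> Hl Hsum.
have key : forall x t, in_diagram l x -> (0 < t)%N -> hook_length l x = (e * t)%N ->
    A t = B t.
  move=> x t Hx Ht Hh; apply: hAB; have := hook_le l x Hl Hx; rewrite Hh => H1.
  have : (e * t <= n * e)%N by apply: leq_trans Hsum.
  nia.
split=> H x Hx t Ht [Hh Ha]; apply: (H x Hx t Ht); split => //.
  by rewrite Ha (key x t).
by rewrite Ha (key x t).
Qed.

Lemma arrow_eq i l m : is_partition l -> is_partition m ->
  (sumn l <= n * e)%N -> (sumn m <= n * e)%N ->
  (crystal_arrow e A i l m <-> crystal_arrow e B i l m).
Proof.
move=> Hl Hm Hsl Hsm.
have Rl := regular_eq l Hl Hsl; have Rm := regular_eq m Hm Hsm.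
have Hs : sorted (fun x y => (y <= x)%N) l by case/andP: Hl.
have Hp : all (fun x => (0 < x)%N) l by case/andP: Hl.
have [HSH _] := size_head_sumn _ Hp.
have PW : forall w, perm_eq w (signed_inodes e i l) ->
    pairwise (fun a b => nprec e A b.2 a.2) w = pairwise (fun a b => nprec e B b.2 a.2) w.
  move=> w Hw; apply: (eq_in_pairwise (P := mem w)); last exact: allss.
  move=> a b Ha Hb /=.
  have [Ha1 Ha2] := signed_bound e i l _ Hs (etrans (esym (perm_mem Hw a)) Ha).
  have [Hb1 Hb2] := signed_bound e i l _ Hs (etrans (esym (perm_mem Hw b)) Hb).
  apply: (nprec_eq (size l) (head 0%N l)) => //; lia.
rewrite /crystal_arrow; split.
  move=> [P1 [R1 [R2 [w [Hw Hpw Hx]]]]]; split=> //; split; first by apply/Rl.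
  split; first by apply/Rm.
  by exists w; split => //; rewrite -PW.
move=> [P1 [R1 [R2 [w [Hw Hpw Hx]]]]]; split=> //; split; first by apply/Rl.
split; first by apply/Rm.
by exists w; split => //; rewrite PW.
Qed.
End Eq.

Theorem mainTheorem9 (e : nat) (A : nat -> int) (n : nat) (y : rat) :
  (3 <= e)%N -> arm_seq e A -> (1 <= n)%N ->
  (exists2 t : nat, (1 <= t <= n)%N & y = (A t)%:~R / t%:R) ->
  (forall t : nat, (1 <= t <= n)%N -> (A t)%:~R / t%:R <= y) ->
  (forall t : nat, (1 <= t <= n)%N -> A t = Num.floor (y * t%:R)) /\
  subcrystal_eq e n A (Aplus y).
Proof.
move=> he HA _ Hex Hmax.
have P1 := part1 _ _ _ _ HA Hex Hmax.
split => //; split.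
  by move=> l Hl Hs; exact: (regular_eq _ _ _ (Aplus y) he P1 l Hl Hs).
by move=> i l m _ Hl Hm Hsl Hsm; exact: (arrow_eq _ _ _ (Aplus y) he P1 i l m Hl Hm Hsl Hsm).
Qed.
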